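(* For every integer $k>0$, the class of Helly-$B_k$-EPG graphs is a proper subclass of the class of $B_k$-EPG graphs.
   Context: A grid is the set of integer points of the plane; a grid edge joins two grid points at distance $1$. A path in the grid is a sequence of distinct grid edges in which consecutive edges share exactly one grid point and non-consecutive edges share none; a bend is a pair of consecutive edges with different directions (horizontal/vertical). An EPG representation of a graph $G$ is a family $(P_v)_{v\in V(G)}$ of grid paths such that distinct $u,v$ are adjacent iff $P_u,P_v$ share a grid edge; it is $B_k$-EPG if every path has at most $k$ bends, and Helly if every subfamily of pairwise edge-intersecting paths has a grid edge common to all its members. $B_k$-EPG (resp. Helly-$B_k$-EPG) graphs are those admitting a $B_k$-EPG (resp. Helly $B_k$-EPG) representation. *)

(* Defs.v *)
From mathcomp Require Import all_boot all_order all_algebra.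
Set Implicit Arguments. Unset Strict Implicit. Unset Printing Implicit Defensive.
Import Order.TTheory GRing.Theory Num.Theory.

Definition gpoint := (int * int)%type.

(* A grid edge joins two grid points at distance 1.  Every grid edge is
   uniquely determined by its lower-left endpoint (x,y) and its direction:
   (x, y, true)  is the horizontal edge {(x,y), (x+1,y)},
   (x, y, false) is the vertical edge   {(x,y), (x,y+1)}. *)
Definition gedge := (int * int * bool)%type.

Definition horizontal (e : gedge) : bool := e.2.

Definition gends (e : gedge) : seq gpoint :=
  let: (x, y, h) := e in
  [:: (x, y); if h then ((x + 1)%R, y) else (x, (y + 1)%R)].

Definition nshared (e f : gedge) : nat := count (fun p => p \in gends f) (gends e).

Definition grid_path (P : seq gedge) : Prop :=
  [/\ 0 < size P, uniq P &
      forall i j, i < j -> j < size P ->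
        nshared (nth (0%R, 0%R, true) P i) (nth (0%R, 0%R, true) P j)
        = (if j == i.+1 then 1 else 0)].

Definition nbends (P : seq gedge) : nat :=
  \sum_(i < (size P).-1)
     (horizontal (nth (0%R, 0%R, true) P i) != horizontal (nth (0%R, 0%R, true) P i.+1)).

Definition simple_graph (T : finType) (g : rel T) : Prop :=
  symmetric g /\ irreflexive g.

Definition edge_intersect (P Q : seq gedge) : Prop := exists e, e \in P /\ e \in Q.

Definition Bk_EPG_rep (k : nat) (T : finType) (g : rel T) (P : T -> seq gedge) : Prop :=
  [/\ forall v, grid_path (P v),
      forall v, nbends (P v) <= k &
      forall u v, u != v -> (g u v <-> edge_intersect (P u) (P v))].

Definition Helly_family (T : finType) (P : T -> seq gedge) : Prop :=
  forall S : {set T},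
    (forall u v, u \in S -> v \in S -> edge_intersect (P u) (P v)) ->
    exists e, forall v, v \in S -> e \in P v.

Definition Bk_EPG (k : nat) (T : finType) (g : rel T) : Prop :=
  exists P, Bk_EPG_rep k g P.

Definition Helly_Bk_EPG (k : nat) (T : finType) (g : rel T) : Prop :=
  exists P, Bk_EPG_rep k g P /\ Helly_family P.

(* Main.v *)
Require Import Defs.
From mathcomp Require Import all_boot all_order all_algebra.
From mathcomp Require Import zify.

Set Implicit Arguments. Unset Strict Implicit. Unset Printing Implicit Defensive.
Import Order.TTheory GRing.Theory Num.Theory.

Definition d0 : gedge := (0%R, 0%R, true).
Notation nth0 P i := (nth d0 P i).

Lemma gendsE (e : gedge) : exists p1 p2, gends e = [:: p1; p2] /\ p1 != p2.
Proof.
case: e => [[x y] h]; exists (x,y); exists (if h then ((x+1)%R,y) else (x,(y+1)%R)).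
by split => //; case: h; apply/eqP => -[]; lia.
Qed.

Lemma share_adj P i j q : grid_path P -> (i < j)%N -> (j < size P)%N ->
  q \in gends (nth0 P i) -> q \in gends (nth0 P j) -> j = i.+1.
Proof.
case=> _ _ H ij js qi qj; have E := H i j ij js.
have: (0 < nshared (nth0 P i) (nth0 P j))%N.
  by rewrite /nshared -has_count; apply/hasP; exists q.
by rewrite E; case: eqP.
Qed.

Lemma share_adj' P i j q : grid_path P -> i != j -> (i < size P)%N -> (j < size P)%N ->
  q \in gends (nth0 P i) -> q \in gends (nth0 P j) -> j = i.+1 \/ i = j.+1.
Proof.
move=> gp; case: (ltngtP i j) => // ij _ si sj qi qj.
  by left; apply: (share_adj gp ij sj qi qj).
by right; apply: (share_adj gp ij si qj qi).
Qed.

Lemma three_edges P q e1 e2 e3 : grid_path P ->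
  e1 \in P -> e2 \in P -> e3 \in P -> e1 != e2 -> e1 != e3 -> e2 != e3 ->
  q \in gends e1 -> q \in gends e2 -> q \in gends e3 -> False.
Proof.
move=> gp h1 h2 h3 n12 n13 n23 q1 q2 q3.
have s1 := h1; have s2 := h2; have s3 := h3.
rewrite -index_mem in s1; rewrite -index_mem in s2; rewrite -index_mem in s3.
rewrite -(nth_index d0 h1) in q1; rewrite -(nth_index d0 h2) in q2.
rewrite -(nth_index d0 h3) in q3.
have ne (x y : gedge) : x \in P -> y \in P -> x != y -> index x P != index y P.
  move=> hx hy; apply: contra => /eqP E.
  by rewrite -(nth_index d0 hx) -(nth_index d0 hy) E.
have := share_adj' gp (ne _ _ h1 h2 n12) s1 s2 q1 q2.
have := share_adj' gp (ne _ _ h1 h3 n13) s1 s3 q1 q3.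
have := share_adj' gp (ne _ _ h2 h3 n23) s2 s3 q2 q3.
lia.
Qed.

Definition epos (q : gpoint) (o : bool) : gedge := (q.1, q.2, o).
Definition eneg (q : gpoint) (o : bool) : gedge :=
  if o then ((q.1 - 1)%R, q.2, true) else (q.1, (q.2 - 1)%R, false).
Definition isB (P : seq gedge) (q : gpoint) (o : bool) :=
  (eneg q o \in P) != (epos q o \in P).

Lemma o_edges g q o : horizontal g = o -> q \in gends g -> g = eneg q o \/ g = epos q o.
Proof.
case: g => [[x y] h] /= <-; case: q => [qx qy].
case: h; rewrite !inE => /orP [] /eqP [] -> ->; rewrite /eneg /epos /=;
  try (by right); left; congr (_, _, _); lia.
Qed.

Lemma eneg_hor q o : horizontal (eneg q o) = o. Proof. by case: o. Qed.
Lemma epos_hor q o : horizontal (epos q o) = o. Proof. by []. Qed.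
Lemma eneg_q q o : q \in gends (eneg q o).
Proof. case: q => x y; case: o; rewrite /= !inE; apply/orP; right; apply/eqP; congr (_,_); lia. Qed.
Lemma epos_q q o : q \in gends (epos q o).
Proof. by case: q => x y; case: o; rewrite /= !inE eqxx. Qed.

Definition bend (P : seq gedge) i := horizontal (nth0 P i) != horizontal (nth0 P i.+1).
Definition bpt (P : seq gedge) i : gpoint :=
  head (0%R, 0%R) [seq p <- gends (nth0 P i) | p \in gends (nth0 P i.+1)].
Definition sfree (P : seq gedge) :=
  if (size P <= 1)%N then gends (nth0 P 0)
  else [seq p <- gends (nth0 P 0) | p \notin gends (nth0 P 1)].
Definition efree (P : seq gedge) :=
  if (size P <= 1)%N then [::]
  else [seq p <- gends (nth0 P (size P).-1) | p \notin gends (nth0 P (size P).-2)].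
Definition bidx (P : seq gedge) := [seq i <- iota 0 (size P).-1 | bend P i].
Definition cand (P : seq gedge) : seq (gpoint * bool) :=
  [seq (p, horizontal (nth0 P 0)) | p <- sfree P] ++
  [seq (p, horizontal (nth0 P (size P).-1)) | p <- efree P] ++
  flatten [seq [:: (bpt P i, true); (bpt P i, false)] | i <- bidx P].

Lemma nbendsE P : nbends P = size (bidx P).
Proof.
rewrite /nbends /bidx size_filter.
rewrite -(big_mkord xpredT (fun i => (bend P i : nat))) /index_iota subn0.
elim: (iota 0 _) => [|x r IH]; by rewrite ?big_nil ?big_cons //= IH.
Qed.

Lemma bpt_eq P i q : grid_path P -> (i.+1 < size P)%N ->
  q \in gends (nth0 P i) -> q \in gends (nth0 P i.+1) -> bpt P i = q.
Proof.
case=> _ _ H si q1 q2; have := H i i.+1 (ltnSn i) si; rewrite eqxx /nshared.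
rewrite /bpt -size_filter.
have : q \in [seq p <- gends (nth0 P i) | p \in gends (nth0 P i.+1)] by rewrite mem_filter q2.
case: [seq _ <- _ | _] => [|x [|y s]] //=.
by rewrite inE => /eqP.
Qed.

Lemma two_pts (a b x y z : gpoint) : x \in [:: a; b] -> y \in [:: a; b] -> z \in [:: a; b] ->
  x != z -> y != z -> x = y.
Proof.
rewrite !inE => /orP [] /eqP -> /orP [] /eqP -> /orP [] /eqP -> //; by rewrite eqxx.
Qed.

Lemma nth_mem P i : (i < size P)%N -> nth0 P i \in P.
Proof. by move=> h; rewrite mem_nth. Qed.

Lemma nth_inj P i j : uniq P -> (i < size P)%N -> (j < size P)%N -> nth0 P i = nth0 P j -> i = j.
Proof. by move=> u si sj E; apply/eqP; rewrite -(nth_uniq d0 si sj u) E. Qed.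

Lemma cand_spec P q o : grid_path P -> isB P q o -> (q, o) \in cand P.
Proof.
move=> gp hB.
have [g [gP [og [qg guni]]]] : exists g, [/\ g \in P, horizontal g = o, q \in gends g &
    forall g', g' \in P -> horizontal g' = o -> q \in gends g' -> g' = g].
  move: hB; rewrite /isB.
  case En: (eneg q o \in P); case Ep: (epos q o \in P) => // _.
    exists (eneg q o); split; rewrite ?eneg_hor ?eneg_q //.
    by move=> g' g'P og' qg'; case: (o_edges og' qg') => // E; rewrite E Ep in g'P.
  exists (epos q o); split; rewrite ?epos_hor ?epos_q //.
  by move=> g' g'P og' qg'; case: (o_edges og' qg') => // E; rewrite E En in g'P.
have gpc := gp; case: gpc => s0 uP Hg.
set i := index g P.
have si : (i < size P)%N by rewrite index_mem.
have gi : nth0 P i = g by rewrite nth_index.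
rewrite /cand !mem_cat.
have next : (i.+1 < size P)%N -> q \in gends (nth0 P i.+1) -> (q, o) \in
    flatten [seq [:: (bpt P i, true); (bpt P i, false)] | i <- bidx P].
  move=> si1 q1.
  have hb : bend P i.
    rewrite /bend gi og; apply/negP => /eqP E.
    have := guni _ (nth_mem si1) (esym E) q1; rewrite -gi => /(nth_inj uP si1 si) /eqP.
    lia.
  apply/flattenP; exists [:: (bpt P i, true); (bpt P i, false)].
    apply/mapP; exists i => //; rewrite mem_filter hb mem_iota /=; lia.
  by rewrite (bpt_eq gp si1 (_ : q \in gends (nth0 P i)) q1) ?gi //; case: o {og guni hB}; rewrite !inE eqxx ?orbT.
have prev : (0 < i)%N -> q \in gends (nth0 P i.-1) -> (q, o) \in
    flatten [seq [:: (bpt P i, true); (bpt P i, false)] | i <- bidx P].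
  move=> i0 q1.
  have si1 : (i.-1 < size P)%N by lia.
  have Ei : i.-1.+1 = i by lia.
  have hb : bend P i.-1.
    rewrite /bend Ei gi og; apply/negP => /eqP E.
    have := guni _ (nth_mem si1) E q1; rewrite -gi => /(nth_inj uP si1 si); lia.
  apply/flattenP; exists [:: (bpt P i.-1, true); (bpt P i.-1, false)].
    apply/mapP; exists i.-1 => //; rewrite mem_filter hb mem_iota /=; lia.
  by rewrite (@bpt_eq P i.-1 q gp) ?Ei ?gi //; case: o {og guni hB next}; rewrite !inE eqxx ?orbT.
case: (boolP (i.+1 < size P)%N) => [si1|si1].
  case: (boolP (q \in gends (nth0 P i.+1))) => [q1|q1]; first by rewrite next ?orbT.
  case: (boolP (0 < i)%N) => [i0|i0].
    case: (boolP (q \in gends (nth0 P i.-1))) => [q2|q2]; first by rewrite prev ?orbT.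
    exfalso.
    have [p1 [p1a p1b]] : exists p, p \in gends (nth0 P i.-1) /\ p \in gends (nth0 P i).
      have := Hg i.-1 i (ltac:(lia)) si; rewrite (_ : i == i.-1.+1) ?eqxx; last by apply/eqP; lia.
      move=> E; have : (0 < nshared (nth0 P i.-1) (nth0 P i))%N by rewrite E.
      by rewrite /nshared -has_count => /hasP [p ??]; exists p.
    have [p2 [p2a p2b]] : exists p, p \in gends (nth0 P i.+1) /\ p \in gends (nth0 P i).
      have := Hg i i.+1 (ltnSn i) si1; rewrite eqxx.
      move=> E; have : (0 < nshared (nth0 P i) (nth0 P i.+1))%N by rewrite E.
      by rewrite /nshared -has_count => /hasP [p ??]; exists p.
    have [a [b [Eab _]]] := gendsE (nth0 P i).
    rewrite Eab in p1b p2b; rewrite -gi Eab in qg.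
    have E12 : p1 = p2.
      apply: (two_pts p1b p2b qg).
        by apply: contraNneq q2 => <-.
      by apply: contraNneq q1 => <-.
    subst p2.
    have := Hg i.-1 i.+1 (ltac:(lia)) si1.
    rewrite (_ : (i.+1 == i.-1.+1) = false); last by apply/negP => /eqP; lia.
    move=> E; have : (0 < nshared (nth0 P i.-1) (nth0 P i.+1))%N.
      by rewrite /nshared -has_count; apply/hasP; exists p1.
    by rewrite E.
  have i0' : i = 0 by lia.
  have g0 : nth0 P 0 = g by rewrite -gi i0'.
  apply/orP; left; apply/mapP; exists q; last by rewrite g0 og.
  rewrite /sfree; case: ifP => _; first by rewrite g0.
  by rewrite mem_filter g0 qg -[1]/(0.+1) -i0' q1.
have il : i = (size P).-1 by lia.
case: (boolP (0 < i)%N) => [i0|i0].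
  case: (boolP (q \in gends (nth0 P i.-1))) => [q2|q2]; first by rewrite prev ?orbT.
  have gl : nth0 P (size P).-1 = g by rewrite -il gi.
  apply/orP; right; apply/orP; left; apply/mapP; exists q; last by rewrite gl og.
  rewrite /efree; case: ifP => [h|_]; first lia.
  rewrite mem_filter gl qg andbT.
  by rewrite (_ : (size P).-2 = i.-1) //; lia.
have i0' : i = 0 by lia.
have g0 : nth0 P 0 = g by rewrite -gi i0'.
apply/orP; left; apply/mapP; exists q; last by rewrite g0 og.
rewrite /sfree; case: ifP => [_|/negbT h]; first by rewrite g0.
lia.
Qed.

Lemma size_gends e : size (gends e) = 2.
Proof. by case: e => [[x y] h]. Qed.

Lemma size_free P : grid_path P -> (size (sfree P) + size (efree P) <= 2)%N.
Proof.
case=> s0 uP Hg; rewrite /sfree /efree; case: ifP => [_|/negbT h].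
  by rewrite size_gends.
rewrite !size_filter.
have c1 : (0 < count (fun p => p \in gends (nth0 P 1)) (gends (nth0 P 0)))%N.
  have := Hg 0 1 (ltn0Sn 0) (ltac:(lia)); rewrite eqxx /nshared => ->.
  done.
have c2 : (0 < count (fun p => p \in gends (nth0 P (size P).-2)) (gends (nth0 P (size P).-1)))%N.
  have := Hg (size P).-2 (size P).-1 (ltac:(lia)) (ltac:(lia)).
  rewrite (_ : (size P).-1 == (size P).-2.+1); last by apply/eqP; lia.
  move=> E; have : (0 < nshared (nth0 P (size P).-2) (nth0 P (size P).-1))%N by rewrite E.
  rewrite /nshared -!has_count => /hasP [p p1 p2]; apply/hasP; exists p => //.
have e1 := count_predC (fun p => p \in gends (nth0 P 1)) (gends (nth0 P 0)).
have e2 := count_predC (fun p => p \in gends (nth0 P (size P).-2)) (gends (nth0 P (size P).-1)).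
rewrite size_gends in e1 e2.
have f1 : count (fun p => p \notin gends (nth0 P 1)) (gends (nth0 P 0)) =
  count (predC (fun p => p \in gends (nth0 P 1))) (gends (nth0 P 0)) := erefl.
have f2 : count (fun p => p \notin gends (nth0 P (size P).-2)) (gends (nth0 P (size P).-1)) =
  count (predC (fun p => p \in gends (nth0 P (size P).-2))) (gends (nth0 P (size P).-1)) := erefl.
rewrite f1 f2. move: c1 c2 e1 e2. set A := count _ _. set B := count _ _. set C := count _ _. set D := count _ _. rewrite size_gends; lia.
Qed.

Lemma size_flat_pairs (s : seq nat) (f : nat -> gpoint) :
  size (flatten [seq [:: (f i, true); (f i, false)] | i <- s]) = (2 * size s)%N /\
  size [seq c <- flatten [seq [:: (f i, true); (f i, false)] | i <- s] | c.2] = size s.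
Proof. elim: s => [|x s [IH1 IH2]] //=; rewrite IH1 IH2; split=> //; lia. Qed.

Lemma size_cand P : grid_path P -> (size (cand P) <= 2 + 2 * nbends P)%N.
Proof.
move=> gp; have := size_free gp; rewrite /cand !size_cat !size_map nbendsE.
have [-> _] := size_flat_pairs (bidx P) (bpt P); lia.
Qed.

Lemma size_candH P : grid_path P -> (size [seq c <- cand P | c.2] <= 2 + nbends P)%N.
Proof.
move=> gp; have := size_free gp; rewrite /cand !filter_cat !size_cat nbendsE.
have [_ ->] := size_flat_pairs (bidx P) (bpt P).
have h1 := size_filter (fun c : gpoint * bool => c.2) [seq (p, horizontal (nth0 P 0)) | p <- sfree P].
have h2 := size_filter (fun c : gpoint * bool => c.2) [seq (p, horizontal (nth0 P (size P).-1)) | p <- efree P].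
have := count_size (fun c : gpoint * bool => c.2) [seq (p, horizontal (nth0 P 0)) | p <- sfree P].
have := count_size (fun c : gpoint * bool => c.2) [seq (p, horizontal (nth0 P (size P).-1)) | p <- efree P].
rewrite !size_map; lia.
Qed.

Lemma cand_one P : grid_path P -> nbends P = 1 ->
  exists A b, cand P = A ++ [:: (b, true); (b, false)] /\ (size A <= 2)%N.
Proof.
move=> gp; rewrite nbendsE => hb.
have := size_free gp.
case E: (bidx P) hb => [|i [|j s]] // _.
rewrite /cand E /= => h.
exists ([seq (p, horizontal (nth0 P 0)) | p <- sfree P] ++
        [seq (p, horizontal (nth0 P (size P).-1)) | p <- efree P]), (bpt P i).
by rewrite -catA size_cat !size_map.
Qed.

Set Implicit Arguments. Unset Strict Implicit. Unset Printing Implicit Defensive.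
Import Order.TTheory GRing.Theory Num.Theory.

Definition sh (g : gedge) (t : int) : gedge :=
  let: (x, y, h) := g in if h then ((x + t)%R, y, true) else (x, (y + t)%R, false).

Lemma sh_inj g : injective (sh g).
Proof. case: g => [[x y] [|]] t t' /= [] ; lia. Qed.

Lemma sh0 g : sh g 0 = g.
Proof. by case: g => [[x y] [|]] /=; rewrite addr0. Qed.

Lemma walkQ (Q : nat -> bool) : Q 0 -> (exists N, ~~ Q N) ->
  exists d, (forall t, (t <= d)%N -> Q t) /\ ~~ Q d.+1.
Proof.
move=> Q0 ex.
have ex' : exists N, ~~ Q N by [].
case: (ex_minnP ex') => N nQ Nmin.
have N0 : N != 0 by apply: contraNneq nQ => ->.
exists N.-1; split; last by rewrite prednK ?lt0n.
move=> t tN; apply/negPn/negP => /Nmin; lia.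
Qed.

Lemma walk_fin (P : seq gedge) (f : nat -> gedge) : injective f ->
  exists N, f N \notin P.
Proof.
move=> fi.
case: (boolP (all (fun t => f t \in P) (iota 0 (size P).+1))) => [/allP A|].
  have U : uniq [seq f t | t <- iota 0 (size P).+1] by rewrite map_inj_uniq ?iota_uniq.
  have S : {subset [seq f t | t <- iota 0 (size P).+1] <= P}.
    by move=> e /mapP [t tin ->]; apply: A.
  by have := uniq_leq_size U S; rewrite size_map size_iota ltnn.
by rewrite -has_predC => /hasP [N _ /= h]; exists N.
Qed.

Lemma run (P : seq gedge) g : g \in P -> exists d1 d2 : nat,
  [/\ forall t : int, (- (d1%:Z) <= t <= d2%:Z)%R -> sh g t \in P,
      sh g (d2%:Z + 1)%R \notin P & sh g (- (d1%:Z) - 1)%R \notin P].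
Proof.
move=> gP.
have [d2 [H2 N2]] : exists d, (forall t, (t <= d)%N -> sh g (Posz t) \in P) /\ ~~ (sh g (Posz d.+1) \in P).
  apply: (walkQ (Q := fun t => sh g (Posz t) \in P)); first by rewrite sh0.
  apply: walk_fin => t t' /sh_inj; lia.
have [d1 [H1 N1]] : exists d, (forall t, (t <= d)%N -> sh g (- Posz t)%R \in P) /\ ~~ (sh g (- Posz d.+1)%R \in P).
  apply: (walkQ (Q := fun t => sh g (- Posz t)%R \in P)); first by rewrite oppr0 sh0.
  apply: walk_fin => t t' /sh_inj; lia.
exists d1, d2; split.
- case=> [n|n] hn.
    by apply: H2; lia.
  rewrite NegzE; apply: H1; lia.
- by rewrite (_ : (d2%:Z + 1)%R = Posz d2.+1) //; lia.
- by rewrite (_ : (- d1%:Z - 1)%R = (- Posz d1.+1)%R) //; lia.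
Qed.

Lemma nb0 P : nbends P = 0 -> forall i, (i < size P)%N ->
  horizontal (nth0 P i) = horizontal (nth0 P 0).
Proof.
rewrite nbendsE /bidx => /eqP; rewrite size_eq0 => /eqP E.
elim=> [//|i IH] si.
rewrite -IH; last lia.
have : i \notin [seq i <- iota 0 (size P).-1 | bend P i] by rewrite E.
rewrite mem_filter mem_iota /bend; case: eqP => // _ /=; lia.
Qed.

Lemma nb0' P g g' : nbends P = 0 -> g \in P -> g' \in P -> horizontal g = horizontal g'.
Proof.
move=> h gP g'P.
rewrite -(nth_index d0 gP) -(nth_index d0 g'P) !nb0 // index_mem //.
Qed.

Set Implicit Arguments. Unset Strict Implicit. Unset Printing Implicit Defensive.
Import Order.TTheory GRing.Theory Num.Theory.

Lemma hseg P x y : (x, y, true) \in P -> exists u1 u2 : int,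
  [/\ (u1 <= x < u2)%R, forall t, (u1 <= t < u2)%R -> (t, y, true) \in P,
      isB P (u1, y) true & isB P (u2, y) true].
Proof.
move=> gP; have [d1 [d2 [H N2 N1]]] := run gP.
exists (x - d1%:Z)%R, (x + d2%:Z + 1)%R; split.
- lia.
- move=> t ht; have := H (t - x)%R (ltac:(lia)); rewrite /sh.
  by rewrite (_ : (x + (t - x))%R = t) //; lia.
- rewrite /isB /eneg /epos /=.
  have -> : (((x - d1%:Z) - 1)%R, y, true) \in P = false.
    by apply/negbTE; move: N1; rewrite /sh; rewrite (_ : (x + (- d1%:Z - 1))%R = ((x - d1%:Z) - 1)%R) //; lia.
  have := H (- d1%:Z)%R (ltac:(lia)); rewrite /sh => ->.
  done.
- rewrite /isB /eneg /epos /=.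
  have -> : (x + d2%:Z + 1 , y, true)%R \in P = false.
    by apply/negbTE; move: N2; rewrite /sh; rewrite (_ : (x + (d2%:Z + 1))%R = (x + d2%:Z + 1)%R) //; lia.
  have := H (d2%:Z)%R (ltac:(lia)); rewrite /sh.
  by rewrite (_ : (x + d2%:Z + 1 - 1)%R = (x + d2%:Z)%R) ?eqxx //; [move=> ->|]; lia.
Qed.

Lemma vseg P x y : (x, y, false) \in P -> exists u1 u2 : int,
  [/\ (u1 <= y < u2)%R, forall t, (u1 <= t < u2)%R -> (x, t, false) \in P,
      isB P (x, u1) false & isB P (x, u2) false].
Proof.
move=> gP; have [d1 [d2 [H N2 N1]]] := run gP.
exists (y - d1%:Z)%R, (y + d2%:Z + 1)%R; split.
- lia.
- move=> t ht; have := H (t - y)%R (ltac:(lia)); rewrite /sh.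
  by rewrite (_ : (y + (t - y))%R = t) //; lia.
- rewrite /isB /eneg /epos /=.
  have -> : (x, ((y - d1%:Z) - 1)%R, false) \in P = false.
    by apply/negbTE; move: N1; rewrite /sh; rewrite (_ : (y + (- d1%:Z - 1))%R = ((y - d1%:Z) - 1)%R) //; lia.
  have := H (- d1%:Z)%R (ltac:(lia)); rewrite /sh => ->.
  done.
- rewrite /isB /eneg /epos /=.
  have -> : (x, y + d2%:Z + 1, false)%R \in P = false.
    by apply/negbTE; move: N2; rewrite /sh; rewrite (_ : (y + (d2%:Z + 1))%R = (y + d2%:Z + 1)%R) //; lia.
  have := H (d2%:Z)%R (ltac:(lia)); rewrite /sh.
  by rewrite (_ : (y + d2%:Z + 1 - 1)%R = (y + d2%:Z)%R) ?eqxx //; [move=> ->|]; lia.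
Qed.

Lemma mem3 (T : eqType) (x y z : T) A : x \in A ++ [:: y; z] -> x != y -> x \in A ++ [:: z].
Proof. rewrite !mem_cat !inE => /orP [->|/orP [/eqP ->|->]] //; [by rewrite eqxx | by rewrite orbT]. Qed.
Lemma mem3' (T : eqType) (x y z : T) A : x \in A ++ [:: y; z] -> x != z -> x \in A ++ [:: y].
Proof. rewrite !mem_cat !inE => /orP [->|/orP [->|/eqP ->]] //; [by rewrite orbT | by rewrite eqxx]. Qed.

Lemma isB_neg P q o : isB P q o -> (eneg q o \in P) = ~~ (epos q o \in P).
Proof. by rewrite /isB; case: (_ \in P); case: (_ \in P). Qed.

Lemma onebend P x0 y0 : grid_path P -> (nbends P <= 1)%N -> (x0, y0, true) \in P ->
  exists l r : int, [/\ (l <= x0 < r)%R,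
   (forall t, (l <= t < r)%R -> (t, y0, true) \in P),
   (forall t y, (t, y, true) \in P -> y = y0 /\ (l <= t < r)%R) &
   (forall x1 t, (x1, t, false) \in P -> (x1 = l \/ x1 = r) /\
        (forall t', (y0 <= t' <= t)%R -> (x1, t', false) \in P) /\
        (forall t', (t <= t' < y0)%R -> (x1, t', false) \in P))].
Proof.
move=> gp nb eP.
have [l [r [lr Hlr BL BR]]] := hseg eP.
have NL : ((l - 1)%R, y0, true) \notin P.
  by move: (isB_neg BL); rewrite /eneg /epos /= (Hlr l); [move=> -> | lia].
have NR : (r, y0, true) \notin P.
  move: BR; rewrite /isB /eneg /epos /= (Hlr (r - 1)%R); last lia.
  by case: (_ \in P).
exists l, r; split => //.
- move=> t y tP; case: (boolP ((y == y0) && (l <= t < r)%R)) => [/andP [/eqP -> ->] //|H].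
  exfalso.
  have [u1 [u2 [ut Hu B1 B2]]] := hseg tP.
  have A1 : y = y0 -> ~~ (u1 <= l - 1 < u2)%R.
    by move=> E; apply: contra NL => h; rewrite -E Hu.
  have A2 : y = y0 -> ~~ (u1 <= r < u2)%R.
    by move=> E; apply: contra NR => h; rewrite -E Hu.
  have U : uniq [:: ((l, y0), true); ((r, y0), true); ((u1, y), true); ((u2, y), true)].
    rewrite /= !inE !xpair_eqE !eqxx !andbT; move: H A1 A2 lr ut; case: eqP => [->|ny]; rewrite ?eqxx /=; [move=> h1 /(_ erefl) h2 /(_ erefl) h3 h4 h5; lia|]. have -> : (y0 == y) = false by apply/eqP => E; apply: ny. rewrite !andbF /= => _ _ _ h4 h5; lia.
  have S : {subset [:: ((l, y0), true); ((r, y0), true); ((u1, y), true); ((u2, y), true)]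
             <= [seq c <- cand P | c.2]}.
    move=> c; rewrite !inE => /or4P [] /eqP ->; rewrite mem_filter /=; apply: cand_spec => //.
  have := uniq_leq_size U S; have := size_candH gp; rewrite /= => h1 h2; move: (leq_trans h2 h1); lia.
- move=> x1 t tP.
  have nb1 : nbends P = 1.
    have : nbends P != 0 by apply/eqP => h; move: (nb0' h eP tP).
    lia.
  have [A [b [EA sA]]] := cand_one gp nb1.
  have [v1 [v2 [vt Hv B1 B2]]] := vseg tP.
  have inc c : isB P c.1 c.2 -> c \in A ++ [:: (b, true); (b, false)].
    by case: c => q o /= h; rewrite -EA; apply: cand_spec.
  have U : uniq [:: ((l, y0), true); ((r, y0), true); ((x1, v1), false); ((x1, v2), false)].
    by rewrite /= !inE !xpair_eqE !eqxx !andbT !andbF /=; lia.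
  have bT : (b, true) \in [:: ((l, y0), true); ((r, y0), true)].
    apply/negPn/negP => nb'; move: nb'; rewrite !inE negb_or => /andP [n1 n2].
    have S : {subset [:: ((l, y0), true); ((r, y0), true); ((x1, v1), false); ((x1, v2), false)]
               <= A ++ [:: (b, false)]}.
      move=> c; rewrite !inE => /or4P [] /eqP ->.
      + by apply: mem3 (inc ((l, y0), true) BL) _; rewrite eq_sym.
      + by apply: mem3 (inc ((r, y0), true) BR) _; rewrite eq_sym.
      + by apply: mem3 (inc ((x1, v1), false) B1) _; rewrite xpair_eqE andbF.
      + by apply: mem3 (inc ((x1, v2), false) B2) _; rewrite xpair_eqE andbF.
    have := uniq_leq_size U S; rewrite size_cat /= => h; by have := leq_trans h (leq_add sA (leqnn 1)).
  have bF : (b, false) \in [:: ((x1, v1), false); ((x1, v2), false)].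
    apply/negPn/negP => nb'; move: nb'; rewrite !inE negb_or => /andP [n1 n2].
    have S : {subset [:: ((l, y0), true); ((r, y0), true); ((x1, v1), false); ((x1, v2), false)]
               <= A ++ [:: (b, true)]}.
      move=> c; rewrite !inE => /or4P [] /eqP ->.
      + by apply: mem3' (inc ((l, y0), true) BL) _; rewrite xpair_eqE andbF.
      + by apply: mem3' (inc ((r, y0), true) BR) _; rewrite xpair_eqE andbF.
      + by apply: mem3' (inc ((x1, v1), false) B1) _; rewrite eq_sym.
      + by apply: mem3' (inc ((x1, v2), false) B2) _; rewrite eq_sym.
    have := uniq_leq_size U S; rewrite size_cat /= => h; by have := leq_trans h (leq_add sA (leqnn 1)).
  case: b bT bF {EA inc} => bx bY; rewrite !inE !xpair_eqE !eqxx !andbT => bT bF.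
  move/orP: bT => [] /andP [/eqP E1 /eqP E2]; move/orP: bF => [] /andP [/eqP E3 /eqP E4];
  subst; split; try (by [left|right]); split => t' ht'; apply: Hv; lia.
Qed.

Set Implicit Arguments. Unset Strict Implicit. Unset Printing Implicit Defensive.
Import Order.TTheory GRing.Theory Num.Theory.

Definition Data (P : seq gedge) (x0 y0 l r : int) : Prop :=
  [/\ (l <= x0 < r)%R,
   (forall t, (l <= t < r)%R -> (t, y0, true) \in P),
   (forall t y, (t, y, true) \in P -> y = y0 /\ (l <= t < r)%R) &
   (forall x1 t, (x1, t, false) \in P -> (x1 = l \/ x1 = r) /\
        (forall t', (y0 <= t' <= t)%R -> (x1, t', false) \in P) /\
        (forall t', (t <= t' < y0)%R -> (x1, t', false) \in P))].

Definition Left (Pp Pr Ps : seq gedge) (lp lr ls : int) : Prop :=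
  (exists t, [/\ (lp <= t)%R, (lr <= t)%R & (t < ls)%R]) \/
  (lp = lr /\ exists t, [/\ (lp, t, false) \in Pp, (lp, t, false) \in Pr & (lp, t, false) \notin Ps]).

Definition Right (Pp Pr Ps : seq gedge) (rp rr rs : int) : Prop :=
  (exists t, [/\ (rs <= t)%R, (t < rp)%R & (t < rr)%R]) \/
  (rp = rr /\ exists t, [/\ (rp, t, false) \in Pp, (rp, t, false) \in Pr & (rp, t, false) \notin Ps]).

Lemma Left_sym Pp Pr Ps lp lr ls : Left Pp Pr Ps lp lr ls -> Left Pr Pp Ps lr lp ls.
Proof.
case=> [[t [h1 h2 h3]]|[E [t [h1 h2 h3]]]]; [left; exists t; split=> // | right; split=> //].
by exists t; rewrite -E; split.
Qed.

Lemma Right_sym Pp Pr Ps rp rr rs : Right Pp Pr Ps rp rr rs -> Right Pr Pp Ps rr rp rs.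
Proof.
case=> [[t [h1 h2 h3]]|[E [t [h1 h2 h3]]]]; [left; exists t; split=> // | right; split=> //].
by exists t; rewrite -E; split.
Qed.

Lemma classify Pp Pr Ps x0 y0 lp rp lr rr ls rs f :
  Data Pp x0 y0 lp rp -> Data Pr x0 y0 lr rr -> Data Ps x0 y0 ls rs ->
  f \in Pp -> f \in Pr -> f \notin Ps ->
  Left Pp Pr Ps lp lr ls \/ Right Pp Pr Ps rp rr rs.
Proof.
case=> [p1 p2 p3 p4] [r1 r2 r3 r4] [s1 s2 s3 s4].
case: f => [[fx fy] [|]] fp fr fs.
  have [E1 h1] := p3 _ _ fp; have [_ h2] := r3 _ _ fr.
  subst fy.
  have : ~~ (ls <= fx < rs)%R by apply: contra fs => /s2.
  move=> h3.
  case: (ltP fx ls) => h4.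
    by left; left; exists fx; split; lia.
  by right; left; exists fx; split; lia.
have [[E1|E1] _] := p4 _ _ fp; have [[E2|E2] _] := r4 _ _ fr; subst fx.
- by left; right; split=> //; exists fy; split.
- exfalso; lia.
- exfalso; lia.
- by right; right; split=> //; exists fy; split.
Qed.

Lemma VV (Pp Pr Ps : seq gedge) (x1 y0 t1 t2 hx : int) : grid_path Pp ->
  (hx, y0, true) \in Pp -> (x1, y0) \in gends (hx, y0, true) ->
  (forall t, (x1, t, false) \in Pp -> (forall t', (y0 <= t' <= t)%R -> (x1, t', false) \in Pp) /\
        (forall t', (t <= t' < y0)%R -> (x1, t', false) \in Pp)) ->
  (forall t, (x1, t, false) \in Pr -> (forall t', (y0 <= t' <= t)%R -> (x1, t', false) \in Pr) /\
        (forall t', (t <= t' < y0)%R -> (x1, t', false) \in Pr)) ->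
  (forall t, (x1, t, false) \in Ps -> (forall t', (y0 <= t' <= t)%R -> (x1, t', false) \in Ps) /\
        (forall t', (t <= t' < y0)%R -> (x1, t', false) \in Ps)) ->
  (x1, t1, false) \in Pp -> (x1, t1, false) \in Pr -> (x1, t1, false) \notin Ps ->
  (x1, t2, false) \in Pp -> (x1, t2, false) \in Ps -> (x1, t2, false) \notin Pr -> False.
Proof.
move=> gp hP hq Cp Cr Cs a1 a2 a3 b1 b2 b3.
have [Cr1 Cr2] := Cr _ a2; have [Cs1 Cs2] := Cs _ b2.
have [Cp1 Cp2] := Cp _ a1; have [Cp1' Cp2'] := Cp _ b1.
case: (lerP y0 t1) => h1; case: (lerP y0 t2) => h2.
- case: (lerP t1 t2) => h3.
    by move: a3; rewrite Cs1 //; lia.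
  by move: b3; rewrite Cr1 //; lia.
- apply: (three_edges (q := (x1, y0)) gp hP (Cp1 y0 (ltac:(lia))) (Cp2' (y0 - 1)%R (ltac:(lia)))) => //; rewrite /= ?inE ?xpair_eqE ?andbF ?eqxx ?andbT //=; lia.
- apply: (three_edges (q := (x1, y0)) gp hP (Cp1' y0 (ltac:(lia))) (Cp2 (y0 - 1)%R (ltac:(lia)))) => //; rewrite /= ?inE ?xpair_eqE ?andbF ?eqxx ?andbT //=; lia.
- case: (lerP t1 t2) => h3.
    by move: b3; rewrite Cr2 //; lia.
  by move: a3; rewrite Cs2 //; lia.
Qed.

Lemma LL Pp Pr Ps x0 y0 lp rp lr rr ls rs : grid_path Pp ->
  Data Pp x0 y0 lp rp -> Data Pr x0 y0 lr rr -> Data Ps x0 y0 ls rs ->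
  Left Pp Pr Ps lp lr ls -> Left Pp Ps Pr lp ls lr -> False.
Proof.
move=> gp [p1 p2 p3 p4] [r1 r2 r3 r4] [s1 s2 s3 s4].
case=> [[t [h1 h2 h3]]|[E [t [h1 h2 h3]]]] [[t' [h1' h2' h3']]|[E' [t' [h1' h2' h3']]]];
  try (exfalso; lia).
subst lr ls.
apply: (VV (x1 := lp) (hx := lp) gp (p2 lp (ltac:(lia))) _ _ _ _ h1 h2 h3 h1' h2' h3').
- by rewrite /= inE eqxx.
- by move=> t0 /p4 [_ ?].
- by move=> t0 /r4 [_ ?].
- by move=> t0 /s4 [_ ?].
Qed.

Lemma RR Pp Pr Ps x0 y0 lp rp lr rr ls rs : grid_path Pp ->
  Data Pp x0 y0 lp rp -> Data Pr x0 y0 lr rr -> Data Ps x0 y0 ls rs ->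
  Right Pp Pr Ps rp rr rs -> Right Pp Ps Pr rp rs rr -> False.
Proof.
move=> gp [p1 p2 p3 p4] [r1 r2 r3 r4] [s1 s2 s3 s4].
case=> [[t [h1 h2 h3]]|[E [t [h1 h2 h3]]]] [[t' [h1' h2' h3']]|[E' [t' [h1' h2' h3']]]];
  try (exfalso; lia).
subst rr rs.
apply: (VV (x1 := rp) (hx := (rp - 1)%R) gp (p2 (rp - 1)%R (ltac:(lia))) _ _ _ _ h1 h2 h3 h1' h2' h3').
- by rewrite /= !inE (_ : (rp - 1 + 1)%R = rp) ?eqxx ?orbT //; lia.
- by move=> t0 /p4 [_ ?].
- by move=> t0 /r4 [_ ?].
- by move=> t0 /s4 [_ ?].
Qed.

Lemma sun_core (Pa Pb Pc : seq gedge) x0 y0 :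
  grid_path Pa -> grid_path Pb -> grid_path Pc ->
  (nbends Pa <= 1)%N -> (nbends Pb <= 1)%N -> (nbends Pc <= 1)%N ->
  (x0, y0, true) \in Pa -> (x0, y0, true) \in Pb -> (x0, y0, true) \in Pc ->
  (exists f, [/\ f \in Pa, f \in Pb & f \notin Pc]) ->
  (exists f, [/\ f \in Pb, f \in Pc & f \notin Pa]) ->
  (exists f, [/\ f \in Pa, f \in Pc & f \notin Pb]) -> False.
Proof.
move=> ga gb gc na nb nc ea eb ec [f1 [f1a f1b f1c]] [f2 [f2b f2c f2a]] [f3 [f3a f3c f3b]].
have [la [ra Da]] := onebend ga na ea.
have [lb [rb Db]] := onebend gb nb eb.
have [lc [rc Dc]] := onebend gc nc ec.
have Da' : Data Pa x0 y0 la ra by [].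
have Db' : Data Pb x0 y0 lb rb by [].
have Dc' : Data Pc x0 y0 lc rc by [].
have c1 := classify Da' Db' Dc' f1a f1b f1c.
have c2 := classify Db' Dc' Da' f2b f2c f2a.
have c3 := classify Da' Dc' Db' f3a f3c f3b.
case: c1 => c1; case: c2 => c2; case: c3 => c3.
- exact: (LL ga Da' Db' Dc' c1 c3).
- exact: (LL gb Db' Da' Dc' (Left_sym c1) c2).
- exact: (LL ga Da' Db' Dc' c1 c3).
- exact: (RR gc Dc' Db' Da' (Right_sym c2) (Right_sym c3)).
- exact: (LL gc Dc' Db' Da' (Left_sym c2) (Left_sym c3)).
- exact: (RR ga Da' Db' Dc' c1 c3).
- exact: (RR gb Db' Da' Dc' (Right_sym c1) c2).
- exact: (RR ga Da' Db' Dc' c1 c3).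
Qed.

Set Implicit Arguments. Unset Strict Implicit. Unset Printing Implicit Defensive.
Import Order.TTheory GRing.Theory Num.Theory.

Definition swapP (p : gpoint) : gpoint := (p.2, p.1).
Definition swapE (e : gedge) : gedge := let: (x, y, h) := e in (y, x, ~~ h).

Lemma swapP_inj : injective swapP.
Proof. by case=> x y [x' y'] [-> ->]. Qed.
Lemma swapE_inj : injective swapE.
Proof. by case=> [[x y] h] [[x' y'] h'] [-> -> /negb_inj ->]. Qed.

Lemma gends_swap e : gends (swapE e) = map swapP (gends e).
Proof. by case: e => [[x y] [|]]. Qed.

Lemma nshared_swap e f : nshared (swapE e) (swapE f) = nshared e f.
Proof.
rewrite /nshared !gends_swap count_map; apply: eq_count => p /=.
by rewrite mem_map //; apply: swapP_inj.
Qed.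

Lemma grid_path_swap P : grid_path P -> grid_path (map swapE P).
Proof.
case=> s0 u H; split; first by rewrite size_map.
  by rewrite (map_inj_uniq swapE_inj).
move=> i j ij js; rewrite size_map in js.
rewrite (nth_map d0) ?(nth_map d0) ?nshared_swap //; first exact: H.
lia.
Qed.

Lemma nbends_swap P : nbends (map swapE P) = nbends P.
Proof.
rewrite /nbends size_map; apply: eq_bigr => i _.
have hi := ltn_ord i.
rewrite (nth_map d0) ?(nth_map d0); try lia.
by case: (nth d0 P i) => [[? ?] [|]]; case: (nth d0 P i.+1) => [[? ?] [|]].
Qed.

Lemma mem_swap e P : (swapE e \in map swapE P) = (e \in P).
Proof. by rewrite mem_map //; apply: swapE_inj. Qed.

Lemma sun_any (Pa Pb Pc : seq gedge) e :
  grid_path Pa -> grid_path Pb -> grid_path Pc ->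
  (nbends Pa <= 1)%N -> (nbends Pb <= 1)%N -> (nbends Pc <= 1)%N ->
  e \in Pa -> e \in Pb -> e \in Pc ->
  (exists f, [/\ f \in Pa, f \in Pb & f \notin Pc]) ->
  (exists f, [/\ f \in Pb, f \in Pc & f \notin Pa]) ->
  (exists f, [/\ f \in Pa, f \in Pc & f \notin Pb]) -> False.
Proof.
case: e => [[x0 y0] [|]] ga gb gc na nb nc ea eb ec F1 F2 F3.
  exact: (sun_core ga gb gc na nb nc ea eb ec F1 F2 F3).
apply: (sun_core (x0 := y0) (y0 := x0) (grid_path_swap ga) (grid_path_swap gb) (grid_path_swap gc));
  rewrite ?nbends_swap //.
- by move: ea; rewrite -(mem_swap _ Pa).
- by move: eb; rewrite -(mem_swap _ Pb).
- by move: ec; rewrite -(mem_swap _ Pc).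
- by case: F1 => f [h1 h2 h3]; exists (swapE f); rewrite !mem_swap.
- by case: F2 => f [h1 h2 h3]; exists (swapE f); rewrite !mem_swap.
- by case: F3 => f [h1 h2 h3]; exists (swapE f); rewrite !mem_swap.
Qed.

Set Implicit Arguments. Unset Strict Implicit. Unset Printing Implicit Defensive.
Import Order.TTheory GRing.Theory Num.Theory.

Definition grid_pathb (P : seq gedge) : bool :=
  [&& (0 < size P)%N, uniq P &
   all (fun i => all (fun j => (i < j)%N ==>
        (nshared (nth0 P i) (nth0 P j) == if j == i.+1 then 1 else 0)%N)
      (iota 0 (size P))) (iota 0 (size P))].

Lemma grid_pathP P : grid_pathb P -> grid_path P.
Proof.
case/and3P => s0 u /allP H; split=> // i j ij js.
have /allP := H i (ltac:(rewrite mem_iota; lia)).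
by move=> /(_ j (ltac:(rewrite mem_iota; lia))); rewrite ij => /eqP.
Qed.

Lemma edge_intersectP P Q : reflect (edge_intersect P Q) (has (mem Q) P).
Proof.
apply: (iffP hasP) => [[e eP eQ]|[e [eP eQ]]]; by exists e.
Qed.

Definition mkE (x y : int) (h : bool) : gedge := (x, y, h).

Definition sunPn (i : nat) : seq gedge :=
  match i with
  | 0 => [:: mkE (-2) 0 true; mkE (-1) 0 true; mkE 0 0 false; mkE 0 1 false]
  | 1 => [:: mkE 0 1 false; mkE 0 0 false; mkE 0 0 true; mkE 1 0 true]
  | 2 => [:: mkE (-2) 0 true; mkE (-1) 0 true; mkE 0 0 true; mkE 1 0 true]
  | 3 => [:: mkE 0 1 false]
  | 4 => [:: mkE 1 0 true]
  | _ => [:: mkE (-2) 0 true]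
  end.

Definition sunE : seq (nat * nat) :=
  [:: (0,1); (0,2); (1,2); (0,3); (1,3); (1,4); (2,4); (0,5); (2,5)].
Definition sunGn (i j : nat) := ((i, j) \in sunE) || ((j, i) \in sunE).

Lemma sun_checks :
  [&& all (fun i => grid_pathb (sunPn i)) (iota 0 6),
      all (fun i => size (bidx (sunPn i)) <= 1)%N (iota 0 6) &
      all (fun u => all (fun v => (u != v) ==> (sunGn u v == has (mem (sunPn v)) (sunPn u))) (iota 0 6)) (iota 0 6)].
Proof. by vm_compute. Qed.

Lemma helly3 k (T : finType) (g : rel T) P (u v w : T) :
  simple_graph g -> Bk_EPG_rep k g P -> Helly_family P ->
  g u v -> g v w -> g u w -> exists e, [/\ e \in P u, e \in P v & e \in P w].
Proof.
move=> [sg ig] [gp _ rep] H guv gvw guw.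
have gne x y : g x y -> x != y by apply: contraTneq => ->; rewrite ig.
have [x y|e He] := H [set u; v; w]; last first.
  by exists e; split; apply: He; rewrite !inE eqxx ?orbT.
move=> hx hy.
have m3 z : z \in [set u; v; w] -> [\/ z = u, z = v | z = w].
  by rewrite !inE => /orP [/orP [/eqP -> | /eqP ->] | /eqP ->]; [apply: Or31 | apply: Or32 | apply: Or33].
case: (eqVneq x y) => [->|nxy].
  case: (gp y) => s0 _ _; exists (nth0 (P y) 0); split; exact: mem_nth.
apply/(rep x y nxy).
move: nxy; case: (m3 _ hx) => ->; case: (m3 _ hy) => ->; rewrite ?eqxx // => _; by rewrite // sg.
Qed.

Lemma sun_simple : simple_graph (fun i j : 'I_6 => sunGn i j).
Proof.
split; first by move=> i j; rewrite /sunGn orbC.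
by case=> [[|[|[|[|[|[|]]]]]] ?].
Qed.

Lemma sun_rep : Bk_EPG_rep 1 (fun i j : 'I_6 => sunGn i j) (fun i => sunPn i).
Proof.
have := sun_checks => /and3P [/allP h1 /allP h2 /allP h3].
split.
- by move=> i; apply: grid_pathP; apply: h1; rewrite mem_iota; have := ltn_ord i; lia.
- by move=> i; rewrite nbendsE; apply: h2; rewrite mem_iota; have := ltn_ord i; lia.
- move=> u v nuv.
  have /allP := h3 u (ltac:(rewrite mem_iota; have := ltn_ord u; lia)).
  move=> /(_ v (ltac:(rewrite mem_iota; have := ltn_ord v; lia))).
  rewrite (_ : (val u != val v) = true) //= => /eqP ->.
  split; by move/edge_intersectP.
Qed.

Definition o6 (n : nat) (h : (n < 6)%N) : 'I_6 := Ordinal h.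

Lemma sun_notHelly : ~ Helly_Bk_EPG 1 (fun i j : 'I_6 => sunGn i j).
Proof.
case=> Q [rep H].
have sm := sun_simple.
have [gp nb rr] := rep.
pose a := @o6 0 isT; pose b := @o6 1 isT; pose c := @o6 2 isT.
pose xab := @o6 3 isT; pose xbc := @o6 4 isT; pose xac := @o6 5 isT.
have [e [ea eb ec]] := helly3 (u := a) (v := b) (w := c) sm rep H isT isT isT.
have notin (x y : 'I_6) f : x != y -> ~~ sunGn x y -> f \in Q y -> f \notin Q x.
  move=> nxy ng fy; apply/negP => fx; move/negP: ng; apply; apply/(rr x y nxy).
  by exists f.
have [f1 [f1a f1b f1x]] := helly3 (u := a) (v := b) (w := xab) sm rep H isT isT isT.
have [f2 [f2b f2c f2x]] := helly3 (u := b) (v := c) (w := xbc) sm rep H isT isT isT.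
have [f3 [f3a f3c f3x]] := helly3 (u := a) (v := c) (w := xac) sm rep H isT isT isT.
apply: (sun_any (gp a) (gp b) (gp c) (nb a) (nb b) (nb c) ea eb ec).
- by exists f1; split => //; apply: (notin c xab).
- by exists f2; split => //; apply: (notin a xbc).
- by exists f3; split => //; apply: (notin b xac).
Qed.

Set Implicit Arguments. Unset Strict Implicit. Unset Printing Implicit Defensive.
Import Order.TTheory GRing.Theory Num.Theory.

Lemma mem_rem_neq (T : eqType) (x y : T) (t : seq T) : y \in t -> y != x -> y \in rem x t.
Proof.
elim: t => [//|z t IH]; rewrite inE /= => /orP [/eqP <-|yt] nyx.
  by case: eqP => [E|_]; [rewrite E eqxx in nyx | rewrite inE eqxx].
by case: eqP => _ //; rewrite inE IH ?orbT.
Qed.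

Lemma rel_inj (T1 T2 : eqType) (s : seq T1) (t : seq T2) (R : T1 -> T2 -> Prop) :
  uniq s -> (forall x, x \in s -> exists2 y, y \in t & R x y) ->
  (forall x x' y, x \in s -> x' \in s -> R x y -> R x' y -> x = x') ->
  (size s <= size t)%N.
Proof.
elim: s t => [//|x s IH] t /andP [xs us] ex inj.
have [y yt Rxy] := ex x (mem_head _ _).
suff h : (size s <= size (rem y t))%N.
  rewrite size_rem // in h.
  have : (0 < size t)%N by case: (t) yt.
  rewrite /=; lia.
apply: IH => //.
- move=> x' x's; have [y' y't Ry'] := ex x' (ltac:(by rewrite inE x's orbT)).
  exists y' => //; apply: mem_rem_neq => //; apply/eqP => E; subst y'.
  have := inj x x' y (mem_head _ _) (ltac:(by rewrite inE x's orbT)) Rxy Ry'.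
  by move=> E; rewrite E x's in xs.
- by move=> x1 x2 y0 h1' h2'; apply: inj; rewrite inE ?h1' ?h2' orbT.
Qed.

Lemma sumn_le (T : Type) (f : T -> nat) (s : seq T) c :
  (forall x, f x <= c)%N -> (sumn (map f s) <= size s * c)%N.
Proof. move=> h; elim: s => [//|x s IH] /=; have := h x; lia. Qed.

Definition trc m (Pk : 'I_m -> seq gedge) (g : gedge) : {set 'I_m} := [set l | g \in Pk l].

Definition ptp (g : gedge) (d : nat) : gpoint :=
  let: (x, y, h) := g in if h then ((x + Posz d + 1)%R, y) else (x, (y + Posz d + 1)%R).

Lemma ptp_neg g d : eneg (ptp g d) (horizontal g) = sh g (Posz d).
Proof. case: g => [[x y] [|]]; rewrite /= ?addrK //. Qed.
Lemma ptp_pos g d : epos (ptp g d) (horizontal g) = sh g (Posz d.+1).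
Proof. case: g => [[x y] [|]]; rewrite /= /epos /=; congr (_, _, _); lia. Qed.

Lemma count_bound (m k : nat) (Pk : 'I_m -> seq gedge) (Dt : finType) (S : Dt -> {set 'I_m}) :
  (forall l, grid_path (Pk l)) -> (forall l, nbends (Pk l) <= k)%N ->
  injective S -> (forall d, exists f, trc Pk f = S d) -> (forall d, S d != set0) ->
  (#|Dt| <= m * (2 + 2 * k))%N.
Proof.
move=> gp nb Sinj ex ne.
pose t := flatten [seq cand (Pk l) | l <- enum 'I_m].
have st : (size t <= m * (2 + 2 * k))%N.
  have -> : size t = sumn [seq size (cand (Pk l)) | l <- enum 'I_m].
    by rewrite size_flatten /shape -map_comp.
  apply: leq_trans (@sumn_le _ (fun l => size (cand (Pk l))) (enum (ordinal m)) (2 + 2 * k) _) _.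
    by move=> l /=; apply: (leq_trans (size_cand (gp l))); have := nb l; lia.
  by rewrite size_enum_ord.
apply: leq_trans st; rewrite cardE.
apply: (rel_inj (R := fun d (y : gpoint * bool) => trc Pk (eneg y.1 y.2) = S d)).
- exact: enum_uniq.
- move=> d _; have [f Ef] := ex d.
  have [l0 l0S] : exists l0, l0 \in S d.
    by have /set0Pn [l0 ?] := ne d; exists l0.
  have [d0 [Hd Nd]] : exists d0, (forall t, (t <= d0)%N -> trc Pk (sh f (Posz t)) == S d) /\
     ~~ (trc Pk (sh f (Posz d0.+1)) == S d).
    apply: (walkQ (Q := fun t => trc Pk (sh f (Posz t)) == S d)); first by rewrite sh0 Ef.
    have [N hN] := walk_fin (Pk l0) (f := fun t => sh f (Posz t)) (ltac:(move=> t1 t2 /sh_inj; lia)).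
    exists N; apply: contra hN => /eqP E.
    by move: l0S; rewrite -E inE.
  have E0 := Hd d0 (leqnn _); move/eqP: E0 => E0.
  have [l hl] : exists l, (sh f (Posz d0) \in Pk l) != (sh f (Posz d0.+1) \in Pk l).
    apply/existsP; apply: contraNT Nd; rewrite negb_exists => /forallP H.
    rewrite -E0; apply/eqP/setP => l; rewrite !inE; apply/eqP.
    by rewrite eq_sym; have := H l; rewrite negbK.
  exists (ptp f d0, horizontal f); last by rewrite /= ptp_neg.
  apply/flattenP; exists (cand (Pk l)); first by apply: map_f; rewrite mem_enum.
  apply: cand_spec => //; by rewrite /isB ptp_neg ptp_pos.
- by move=> x x' y _ _ /= -> /Sinj.
Qed.

Set Implicit Arguments. Unset Strict Implicit. Unset Printing Implicit Defensive.
Import Order.TTheory GRing.Theory Num.Theory.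

Ltac bsolve := rewrite ?andbT ?andbF ?orbF; repeat (case: eqP => ?); simpl; lia.

Lemma nshared_self e : nshared e e = 2.
Proof. case: e => [[x y] [|]]; rewrite /nshared /= !inE !eqxx /= ?orbT //. Qed.

Lemma gp_cat s1 s2 : grid_path s1 -> grid_path s2 ->
  (forall e f, e \in s1 -> f \in s2 ->
     nshared e f = ((e == last d0 s1) && (f == head d0 s2) : nat)) ->
  grid_path (s1 ++ s2).
Proof.
case=> p1 u1 H1 [p2 u2 H2] X.
split; first by rewrite size_cat; lia.
  rewrite cat_uniq u1 u2 /= andbT; apply/hasPn => f fs2; apply/negP => fs1.
  by have := X f f fs1 fs2; rewrite nshared_self; case: (_ && _).
move=> i j ij; rewrite size_cat => js.
rewrite !nth_cat.
case: (ltnP j (size s1)) => j1.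
  by rewrite (ltn_trans ij j1); apply: H1.
case: (ltnP i (size s1)) => i1.
  have js2 : (j - size s1 < size s2)%N by lia.
  have ps1 : ((size s1).-1 < size s1)%N by rewrite prednK.
  rewrite X ?mem_nth //.
  rewrite -nth_last -(seq.nth0 d0 s2) (nth_uniq d0 i1 ps1 u1) (nth_uniq d0 js2 p2 u2).
  case: eqP => ?; case: eqP => ?; case: eqP => ?; simpl; lia.
have ij' : (i - size s1 < j - size s1)%N by lia.
have js' : (j - size s1 < size s2)%N by lia.
rewrite (H2 _ _ ij' js').
case: eqP => ?; case: eqP => ?; simpl; lia.
Qed.

Definition hrun (x y : int) (n : nat) : seq gedge := [seq ((x + Posz t)%R, y, true) | t <- iota 0 n].
Definition vrun (x y : int) (n : nat) : seq gedge := [seq (x, (y + Posz t)%R, false) | t <- iota 0 n].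

Lemma mem_hrun x y n e : reflect (exists2 t, (t < n)%N & e = ((x + Posz t)%R, y, true)) (e \in hrun x y n).
Proof.
apply: (iffP mapP) => [[t]|[t tn ->]].
  by rewrite mem_iota => /andP [_ tn] ->; exists t.
by exists t; rewrite // mem_iota.
Qed.

Lemma mem_vrun x y n e : reflect (exists2 t, (t < n)%N & e = (x, (y + Posz t)%R, false)) (e \in vrun x y n).
Proof.
apply: (iffP mapP) => [[t]|[t tn ->]].
  by rewrite mem_iota => /andP [_ tn] ->; exists t.
by exists t; rewrite // mem_iota.
Qed.

Lemma gp_hrun x y n : (0 < n)%N -> grid_path (hrun x y n).
Proof.
move=> n0; split; rewrite /hrun ?size_map ?size_iota //.
  rewrite map_inj_uniq ?iota_uniq // => t t' [] /eqP; lia.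
move=> i j ij jn; rewrite !(nth_map 0%N) ?size_iota; try lia.
rewrite !nth_iota; try lia.
rewrite /nshared /= !inE !xpair_eqE; bsolve.
Qed.

Lemma gp_vrun x y n : (0 < n)%N -> grid_path (vrun x y n).
Proof.
move=> n0; split; rewrite /vrun ?size_map ?size_iota //.
  rewrite map_inj_uniq ?iota_uniq // => t t' [] /eqP; lia.
move=> i j ij jn; rewrite !(nth_map 0%N) ?size_iota; try lia.
rewrite !nth_iota; try lia.
rewrite /nshared /= !inE !xpair_eqE; bsolve.
Qed.

Lemma gp_single e : grid_path [:: e].
Proof. by split => // i j ij /=; lia. Qed.

Fixpoint chg (s : seq bool) : nat :=
  match s with
  | x :: ((y :: _) as s') => (x != y) + chg s'
  | _ => 0
  end.

Lemma nbends_chg P : nbends P = chg (map horizontal P).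
Proof.
elim: P => [|e [|f P] IH]; first by rewrite /nbends big_ord0.
  by rewrite /nbends big_ord0.
rewrite /nbends /= big_ord_recl /=; congr (_ + _).
rewrite -[RHS]/(chg (map horizontal (f :: P))) -IH /nbends /=; apply: eq_bigr => i _; by rewrite add0n.
Qed.

Lemma chg_cat s1 s2 : (chg (s1 ++ s2) <= chg s1 + chg s2 + 1)%N.
Proof.
elim: s1 => [|x s1 IH] /=; first lia.
case: s1 IH => [|y s1] IH /=.
  case: s2 {IH} => [|z s2] /=; lia.
move: IH => /=; lia.
Qed.

Lemma chg_nseq n b : chg (nseq n b) = 0.
Proof. by elim: n => [|[|n] IH] //=; rewrite eqxx. Qed.

Lemma map_hor_hrun x y n : map horizontal (hrun x y n) = nseq n true.
Proof.
apply: (@eq_from_nth _ false); rewrite /hrun ?size_map ?size_iota ?size_nseq // => i hi.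
by rewrite (nth_map d0) ?size_map ?size_iota // (nth_map 0%N) ?size_iota // nth_nseq hi.
Qed.
Lemma map_hor_vrun x y n : map horizontal (vrun x y n) = nseq n false.
Proof.
apply: (@eq_from_nth _ false); rewrite /vrun ?size_map ?size_iota ?size_nseq // => i hi.
by rewrite (nth_map d0) ?size_map ?size_iota // (nth_map 0%N) ?size_iota // nth_nseq hi.
Qed.

Set Implicit Arguments. Unset Strict Implicit. Unset Printing Implicit Defensive.
Import Order.TTheory GRing.Theory Num.Theory.

Lemma last_hrun x y n : last d0 (hrun x y n.+1) = ((x + Posz n)%R, y, true).
Proof.
rewrite -nth_last /hrun size_map size_iota (nth_map 0%N) ?size_iota // nth_iota //.
Qed.

Lemma head_hrun x y n : head d0 (hrun x y n.+1) = ((x + Posz 0)%R, y, true).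
Proof. by []. Qed.

Lemma head_vrun x y n : (0 < n)%N -> head d0 (vrun x y n) = (x, (y + Posz 0)%R, false).
Proof. by case: n. Qed.

Section Constr.
Variable a : nat.

Definition Lh : nat := (2 * a * a + 2)%N.
Definition hgt (i j : nat) : nat := (1 + 2 * (i * a + j))%N.

Definition Kp (l : nat) : seq gedge := hrun 0 0 l.+1 ++ vrun (Posz l.+1) 0 Lh.
Definition Xp (i j : nat) : seq gedge :=
  [:: (Posz i.+1, Posz (hgt i j), false)] ++
  (hrun (Posz i.+1) (Posz (hgt i j).+1) (a + j - i) ++
   [:: (Posz (a + j).+1, Posz (hgt i j), false)]).

Lemma gp_Kp l : grid_path (Kp l).
Proof.
apply: gp_cat; [exact: gp_hrun | apply: gp_vrun; rewrite /Lh; lia | ].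
rewrite last_hrun head_vrun; last by rewrite /Lh; lia.
move=> e f /mem_hrun [t tl ->] /mem_vrun [t' tL ->].
rewrite /nshared /= !inE !xpair_eqE; bsolve.
Qed.

Lemma gp_Xp i j : (i < a)%N -> grid_path (Xp i j).
Proof.
move=> ia.
have w : (a + j - i = (a + j - i).-1.+1)%N by lia.
apply: gp_cat; [exact: gp_single | |].
  apply: gp_cat; [apply: gp_hrun; lia | exact: gp_single |].
  rewrite w last_hrun -w => e f /mem_hrun [t tl ->]; rewrite inE => /eqP ->.
  rewrite /= eqxx andbT /nshared /= !inE !xpair_eqE; bsolve.
have hh : head d0 (hrun (Posz i.+1) (Posz (hgt i j).+1) (a + j - i) ++
    [:: (Posz (a + j).+1, Posz (hgt i j), false)]) = ((Posz i.+1 + Posz 0)%R, Posz (hgt i j).+1, true).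
  by rewrite w.
rewrite hh /= => e f; rewrite inE => /eqP ->.
rewrite mem_cat => /orP [/mem_hrun [t tl ->]|]; last rewrite inE => /eqP ->.
  rewrite /nshared /= !inE !xpair_eqE; bsolve.
rewrite /nshared /= !inE !xpair_eqE; bsolve.
Qed.

Lemma nb_Kp l : (nbends (Kp l) <= 1)%N.
Proof.
rewrite nbends_chg /Kp map_cat map_hor_hrun map_hor_vrun.
by have := chg_cat (nseq l.+1 true) (nseq Lh false); rewrite !chg_nseq.
Qed.

Lemma nb_Xp i j : (nbends (Xp i j) <= 2)%N.
Proof.
rewrite nbends_chg /Xp !map_cat map_hor_hrun.
have := chg_cat [:: horizontal (Posz i.+1, Posz (hgt i j), false)]
  (nseq (a + j - i) true ++ [:: horizontal (Posz (a + j).+1, Posz (hgt i j), false)]).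
have := chg_cat (nseq (a + j - i) true) [:: horizontal (Posz (a + j).+1, Posz (hgt i j), false)].
rewrite chg_nseq /=; lia.
Qed.

End Constr.

Set Implicit Arguments. Unset Strict Implicit. Unset Printing Implicit Defensive.
Import Order.TTheory GRing.Theory Num.Theory.

Section G2.
Variable a : nat.
Hypothesis a0 : (0 < a)%N.

Definition VT := ('I_(a + a) + ('I_a * 'I_a))%type.

Definition gG (u v : VT) : bool :=
  match u, v with
  | inl x, inl y => x != y
  | inl x, inr p => (val x == val p.1) || (val x == a + val p.2)%N
  | inr p, inl x => (val x == val p.1) || (val x == a + val p.2)%N
  | inr _, inr _ => false
  end.

Definition PG (v : VT) : seq gedge :=
  match v with
  | inl l => Kp a l
  | inr p => Xp a p.1 p.2
  end.

Lemma gG_simple : simple_graph gG.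
Proof.
split; first by case=> [x|[i j]] [y|[i' j']] //=; rewrite eq_sym.
by case=> [x|[i j]] /=; rewrite ?eqxx.
Qed.

Lemma mem_Kp l e : e \in Kp a l ->
  (exists2 t, (t < l.+1)%N & e = ((0 + Posz t)%R, 0%R, true)) \/
  (exists2 t, (t < Lh a)%N & e = (Posz l.+1, (0 + Posz t)%R, false)).
Proof. by rewrite mem_cat => /orP [/mem_hrun|/mem_vrun]; [left|right]. Qed.

Lemma mem_Xp i j e : e \in Xp a i j ->
  [\/ e = (Posz i.+1, Posz (hgt a i j), false),
      (exists2 t, (t < a + j - i)%N & e = ((Posz i.+1 + Posz t)%R, Posz (hgt a i j).+1, true)) |
      e = (Posz (a + j).+1, Posz (hgt a i j), false)].
Proof.
rewrite /Xp !mem_cat inE => /orP [/eqP ->|/orP [/mem_hrun h|]]; [exact: Or31 | exact: Or32 |].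
by rewrite inE => /eqP ->; exact: Or33.
Qed.

Lemma hgt_lt i j : (i < a)%N -> (j < a)%N -> (hgt a i j < Lh a)%N.
Proof. rewrite /hgt /Lh => ia ja; nia. Qed.

Lemma hgt_inj i j i' j' : (j < a)%N -> (j' < a)%N -> hgt a i j = hgt a i' j' -> i = i' /\ j = j'.
Proof.
rewrite /hgt => ja ja' E.
have E' : (i * a + j = i' * a + j')%N by lia.
have := congr1 (fun n => n %/ a) E'; have := congr1 (fun n => n %% a) E'.
rewrite /= !modnMDl !modn_small // !divnMDl // !divn_small // !addn0.
by move=> -> ->.
Qed.

Lemma PG_rep : Bk_EPG_rep 2 gG PG.
Proof.
split.
- case=> [l|[i j]] /=; first exact: gp_Kp.
  by apply: gp_Xp.
- by case=> [l|[i j]] /=; [apply: leq_trans (nb_Kp _ _) _ | apply: nb_Xp].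
- have KX (l : 'I_(a + a)) (i j : 'I_a) :
      gG (inl l) (inr (i, j)) <-> edge_intersect (Kp a l) (Xp a i j).
    split.
      rewrite /= => /orP [/eqP E|/eqP E].
        exists (Posz i.+1, Posz (hgt a i j), false); split.
          by rewrite mem_cat; apply/orP; right; apply/mem_vrun; exists (hgt a i j);
            [apply: hgt_lt | congr (_, _, _); lia].
        by rewrite /Xp mem_cat inE eqxx.
      exists (Posz (a + j).+1, Posz (hgt a i j), false); split.
        by rewrite mem_cat; apply/orP; right; apply/mem_vrun; exists (hgt a i j);
          [apply: hgt_lt | congr (_, _, _); lia].
      by rewrite /Xp !mem_cat !inE eqxx !orbT.
    case=> e [/mem_Kp eK /mem_Xp eX].
    rewrite /=; case: eK => [[t tl Ee]|[t tL Ee]];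
      case: eX => [Ee'|[t' _ Ee']|Ee']; rewrite Ee in Ee'; case: Ee' => *; lia.
  case=> [x|[i j]] [y|[i' j']] ne.
  + split=> _ //; exists ((0 + Posz 0)%R, 0%R, true).
    by split; rewrite mem_cat; apply/orP; left; apply/mem_hrun; exists 0%N.
  + exact: KX.
  + rewrite /PG /=; have := KX y i j; rewrite /= => ->.
    by split; case=> e [h1 h2]; exists e.
  + split => //; case=> e [/mem_Xp h1 /mem_Xp h2]; exfalso.
    have ja := ltn_ord j; have ja' := ltn_ord j'; have ia := ltn_ord i; have ia' := ltn_ord i'.
    case: h1 => [|[t _]|] E; case: h2 => [|[t' _]|] E'; rewrite E in E'; case: E' => *;
      try lia.
    all: (have [E1 E2] := hgt_inj (i := i) (i' := i') ja ja' (ltac:(rewrite /hgt; nia)));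
      move/val_inj: E1 => E1; move/val_inj: E2 => E2; subst i' j'; by rewrite eqxx in ne.
Qed.

End G2.

Set Implicit Arguments. Unset Strict Implicit. Unset Printing Implicit Defensive.
Import Order.TTheory GRing.Theory Num.Theory.

Lemma G_notHelly k : ~ Helly_Bk_EPG k (@gG (4 * k + 5)).
Proof.
set a := (4 * k + 5)%N.
case=> Q [rep H]; have [gp nb rr] := rep.
have sm := @gG_simple a.
pose Pk (l : 'I_(a + a)) := Q (inl l).
pose S (d : 'I_a * 'I_a) : {set 'I_(a + a)} := [set lshift a d.1; rshift a d.2].
suff B : (#|{: 'I_a * 'I_a}| <= (a + a) * (2 + 2 * k))%N.
  by rewrite card_prod card_ord /a in B; nia.
apply: (@count_bound (a + a) k Pk _ S (fun l => gp _) (fun l => nb _)); last first.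
- by move=> d; apply/set0Pn; exists (lshift a d.1); rewrite !inE eqxx.
- move=> [i j]; have ia := ltn_ord i; have ja := ltn_ord j.
  have [|||f [f1 f2 f3]] := helly3 (u := inl (lshift a i)) (v := inl (rshift a j))
     (w := inr (i, j) : VT a) sm rep H.
  + by rewrite /= -(inj_eq val_inj) /=; lia.
  + by rewrite /= eqxx orbT.
  + by rewrite /= eqxx.
  exists f; apply/setP => l; rewrite !inE /Pk; apply/idP/idP; last first.
    by case/orP => /eqP ->.
  move=> fl; case: (boolP ((l == lshift a i) || (l == rshift a j))) => // hl.
  have : @gG a (inl l) (inr (i, j)).
    by apply/(rr (inl l) (inr (i, j)) isT); exists f.
  move: hl; rewrite /= -!(inj_eq val_inj) /=; lia.
- move=> [i j] [i' j'] /setP E.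
  have := E (lshift a i); have := E (rshift a j); rewrite !inE !eqxx /=.
  rewrite -!(inj_eq val_inj) /= => h1 h2.
  have ia := ltn_ord i; have ja := ltn_ord j; have ia' := ltn_ord i'; have ja' := ltn_ord j'.
  have Ei : i = i' by apply: ord_inj; move: h1 h2; lia.
  have Ej : j = j' by apply: ord_inj; move: h1 h2; lia.
  by rewrite Ei Ej.
Qed.

Unset Implicit Arguments.
Set Strict Implicit.

Theorem lemma5p1 (k : nat) (hk : 0 < k) :
  (forall (T : finType) (g : rel T),
      simple_graph g -> Helly_Bk_EPG k g -> Bk_EPG k g) /\
  (exists (T : finType) (g : rel T),
      simple_graph g /\ Bk_EPG k g /\ ~ Helly_Bk_EPG k g).
Proof.
split.
  by move=> T g _ [P [rep _]]; exists P.
case: (eqVneq k 1) => [->|k1].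
  exists 'I_6, (fun i j : 'I_6 => sunGn i j); split; first exact: sun_simple.
  split; last exact: sun_notHelly.
  by exists (fun i : 'I_6 => sunPn i); exact: sun_rep.
exists (VT (4 * k + 5)), (@gG (4 * k + 5)); split; first exact: gG_simple.
split; last exact: G_notHelly.
exists (@PG (4 * k + 5)).
have [g1 g2 g3] := @PG_rep (4 * k + 5) (ltac:(lia)).
split => // v; apply: leq_trans (g2 v) _; lia.
Qed.
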